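(* Let $k$ be a positive integer and let $n>\frac{k(k-1)}{2}$. Among the partitions counted by $D_k(n)$, those with an even number of parts exceeding the smallest part are equinumerous with those having an odd number of such parts, i.e. $D_k^e(n)=D_k^o(n)$. Consequently, $D_k(n)$ is even.
   Context: $D_k(n)$ is the number of partitions of $n$ into non-negative parts (the part $0$ is allowed) in which the smallest part appears exactly $k$ times and no other part is repeated. $D_k^e(n)$ (resp. $D_k^o(n)$) is the number of such partitions in which the number of parts greater than the smallest part is even (resp. odd). *)

(* Defs.v *)
From mathcomp Require Import all_boot.
Set Implicit Arguments. Unset Strict Implicit. Unset Printing Implicit Defensive.

(* A partition of n into non-negative parts (part 0 allowed) is represented
   as a nonincreasing list of naturals with sum n. *)
Definition is_part (n : nat) (s : seq nat) : bool :=
  sorted geq s && (sumn s == n).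

Definition smallest (s : seq nat) : nat := foldr minn (head 0 s) s.

Definition big_parts (s : seq nat) : seq nat :=
  filter (fun x => smallest s < x) s.

Definition Dk_part (k n : nat) (s : seq nat) : bool :=
  [&& is_part n s, s != [::], count_mem (smallest s) s == k
    & uniq (big_parts s)].

Fixpoint seqs_upto (L M : nat) : seq (seq nat) :=
  match L with
  | 0 => [:: [::]]
  | L'.+1 => [::] :: [seq x :: t | x <- iota 0 M.+1, t <- seqs_upto L' M]
  end.

(* Every partition counted by D_k(n) has all entries <= n and length
   k + m with m <= n (the m parts above the smallest are distinct positive
   integers summing to at most n), hence lies in seqs_upto (n + k) n.
   So the following counts are exactly the cardinalities of the sets. *)
Definition D (k n : nat) : nat := count (Dk_part k n) (seqs_upto (n + k) n).

Definition De (k n : nat) : nat :=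
  count (fun s => Dk_part k n s && ~~ odd (size (big_parts s)))
        (seqs_upto (n + k) n).

Definition Do (k n : nat) : nat :=
  count (fun s => Dk_part k n s && odd (size (big_parts s)))
        (seqs_upto (n + k) n).

(* Main.v *)
Require Import Defs.
From mathcomp Require Import all_boot all_order all_algebra.
From mathcomp Require Import zify ring.
Set Implicit Arguments. Unset Strict Implicit. Unset Printing Implicit Defensive.
Import Order.TTheory GRing.Theory Num.Theory.

Lemma seqs_uptoS L M : seqs_upto L.+1 M =
  [::] :: [seq x :: t | x <- iota 0 M.+1, t <- seqs_upto L M].
Proof. by []. Qed.

Lemma mem_seqs_upto L M s :
  (s \in seqs_upto L M) = (size s <= L) && all (fun x => x <= M) s.
Proof.
elim: L s => [|L IH] [|x t] //; rewrite seqs_uptoS in_cons [_ == _]/= orFb.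
apply/allpairsPdep/andP.
  case=> y [u [Hy Hu [-> ->]]]; move: Hu; rewrite IH => /andP[Hs Ha] /=.
  rewrite mem_iota add0n ltnS in Hy; case/andP: Hy => _ Hy.
  by split; [rewrite ltnS | rewrite Hy Ha].
move=> [Hs /andP[Hx Ht]]; exists x, t; split.
- by rewrite mem_iota add0n ltnS.
- by rewrite IH; apply/andP; split.
- by [].
Qed.

Lemma uniq_seqs_upto L M : uniq (seqs_upto L M).
Proof.
elim: L => [|L IH] //; rewrite seqs_uptoS cons_uniq; apply/andP; split.
  by apply/allpairsPdep => -[x [t [_ _ //]]].
apply: allpairs_uniq_dep => //; first exact: iota_uniq.
by move=> [a b] [c d] _ _ /= [-> ->].
Qed.

Lemma foldr_minnA c d (t : seq nat) :
  foldr minn (minn c d) t = minn c (foldr minn d t).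
Proof. by elim: t => [|y t IH] //=; rewrite IH minnCA. Qed.

Lemma smallest_cons2 x y t : y <= x ->
  smallest (x :: y :: t) = smallest (y :: t).
Proof.
move=> yx; rewrite /smallest /=.
have -> : y = minn y x by apply/esym/minn_idPl.
rewrite foldr_minnA; lia.
Qed.

Lemma foldr_minn_le c (s : seq nat) z : z \in s -> foldr minn c s <= z.
Proof.
elim: s => [|y s IH] //=; rewrite inE => /orP[/eqP->|/IH]; first exact: geq_minl.
by move=> H; apply: leq_trans (geq_minr _ _) H.
Qed.

Lemma smallest_le s z : z \in s -> smallest s <= z.
Proof. exact: foldr_minn_le. Qed.

Lemma smallest_nseq k x : smallest (nseq k.+1 x) = x.
Proof.
rewrite /smallest /=; elim: k => [|k IH] /=; first exact: minnn.
move: IH; rewrite /= => IH. by rewrite IH minnn.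
Qed.

Lemma sorted_nseq k (x : nat) : sorted geq (nseq k x).
Proof. by elim: k => [|[|k] IH] //=; rewrite leqnn. Qed.

Lemma Dk_nseq k n x : 0 < k ->
  Dk_part k n (nseq k x) = (k * x == n) /\ big_parts (nseq k x) = [::].
Proof.
case: k => [|k] // _.
have bp : big_parts (nseq k.+1 x) = [::].
  by rewrite /big_parts smallest_nseq filter_nseq ltnn.
split => //.
rewrite /Dk_part /is_part sorted_nseq sumn_nseq smallest_nseq count_nseq.
by rewrite bp /= eqxx mul1n eqxx !andbT mulnC.
Qed.

Lemma Dk_eq_nseq k n x t : Dk_part k n (x :: x :: t) -> x :: x :: t = nseq k x.
Proof.
set s := x :: x :: t.
case/and4P => /andP[srt _] _ cnt uq.
have mx : smallest s = x.
  apply/eqP; rewrite eqn_leq smallest_le ?inE ?eqxx //=.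
  rewrite leqNgt; apply/negP => lt.
  move: uq; rewrite /big_parts /s /= lt /=.
  by rewrite inE eqxx.
have allx : all (pred1 x) s.
  apply/allP => z zs.
  have h1 : x <= z by rewrite -mx; exact: smallest_le.
  have h2 : z <= x.
    move: zs; rewrite inE => /orP[/eqP->//|zs].
    have gt : transitive geq by move=> a b c g1 g2; exact: leq_trans g2 g1.
    have := order_path_min gt srt.
    by move/allP => /(_ z zs).
  by rewrite /= eqn_leq h1 h2.
move/all_pred1P: allx => E.
move: cnt; rewrite mx E count_nseq /= eqxx mul1n => /eqP <-.
by rewrite -E.
Qed.


Lemma Dk_cons_lt k n x y t : y < x ->
  Dk_part k n (x :: y :: t) = (x <= n) && Dk_part k (n - x) (y :: t)
  /\ big_parts (x :: y :: t) = x :: big_parts (y :: t).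
Proof.
move=> yx.
have sm := smallest_cons2 t (ltnW yx).
have my : smallest (y :: t) <= y by apply: smallest_le; rewrite inE eqxx.
have bp : big_parts (x :: y :: t) = x :: big_parts (y :: t).
  by rewrite /big_parts sm /= (leq_ltn_trans my yx).
split => //.
rewrite /Dk_part /is_part bp sm.
have xt : x \notin y :: t -> x \notin big_parts (y :: t).
  by apply: contra; rewrite mem_filter => /andP[].
have cx : (x == smallest (y :: t)) = false.
  by apply/negbTE; rewrite neq_ltn (leq_ltn_trans my yx) orbT.
rewrite /= cx add0n.
case srt: (path geq y t); last first.
  by rewrite andbF /= andbF.
have ny : x \notin y :: t.
  have gt : transitive geq by move=> a b c g1 g2; exact: leq_trans g2 g1.
  have := order_path_min gt srt => /allP al.
  rewrite inE negb_or neq_ltn yx orbT /=; apply/negP => /al /=.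
  by rewrite leqNgt yx.
rewrite xt //= (ltnW yx) /=.
case: (leqP x n) => xn /=.
  have -> : (x + (y + sumn t) == n) = (y + sumn t == n - x).
    by apply/eqP/eqP; lia.
  by [].
have -> : (x + (y + sumn t) == n) = false by apply/negbTE; lia.
by [].
Qed.

Local Open Scope ring_scope.

Lemma sum_seqs_upto (F : seq nat -> int) L M :
  \sum_(s <- seqs_upto L.+1 M) F s =
  F [::] + \sum_(x <- iota 0 M.+1) \sum_(t <- seqs_upto L M) F (x :: t).
Proof. by rewrite seqs_uptoS big_cons big_allpairs_dep. Qed.

Lemma sum_eq1 (l : seq (seq nat)) a : uniq l ->
  \sum_(t <- l) ((t == a)%:R : int) = (a \in l)%:R.
Proof.
elim: l => [|b l IH] /=; first by rewrite big_nil.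
move=> /andP[Hb Hu]; rewrite big_cons IH // inE.
case: (eqVneq b a) => [<-|nba].
  by rewrite (negbTE Hb) /= addr0.
by rewrite /= add0r.
Qed.

Definition w (k n u : nat) (s : seq nat) : int :=
  if Dk_part k n s && all (fun y => (y < u)%N) s
  then (-1) ^+ size (big_parts s) else 0.

Lemma w_nil k n u : w k n u [::] = 0.
Proof. by rewrite /w /Dk_part andbF. Qed.

Lemma w_cons k n u x t : (0 < k)%N ->
  w k n u (x :: t) =
  if (x < u)%N then
    ((t == nseq k.-1 x) && (k * x == n)%N)%:R
    - (if (x <= n)%N then w k (n - x) x t else 0)
  else 0.
Proof.
move=> k0.
case: (ltnP x u) => xu; last by rewrite /w /= ltnNge xu /= !andbF.
case: t => [|y t].
  have sx : smallest [:: x] = x by rewrite /smallest /= minnn.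
  rewrite /w /Dk_part /is_part /big_parts sx /= ltnn eqxx addn0 xu !andbF /=.
  rewrite if_same subr0 !andbT.
  case: k k0 => [|[|k]] //= _; first by rewrite mul1n; case: (x == n).
  by case: (x == n) => //=.
case: (ltngtP x y) => [xy|yx|<-].
- have -> : w k n u [:: x, y & t] = 0 by rewrite /w /Dk_part /is_part /= leqNgt xy.
  have -> : w k (n - x) x (y :: t) = 0 by rewrite /w /= ltnNge (ltnW xy) /= andbF.
  rewrite if_same subr0.
  case: k k0 => [|[|k]] //= _.
  by rewrite eqseq_cons eq_sym (ltn_eqF xy).
- have [E1 E2] := Dk_cons_lt k n t yx.
  have gt : transitive geq by move=> a b c g1 g2; exact: leq_trans g2 g1.
  have ny : (y :: t != nseq k.-1 x).
    case: (k.-1) => [|j] //=; by rewrite eqseq_cons (ltn_eqF yx).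
  rewrite (negbTE ny) /= sub0r /w E1 E2 /=.
  case: (leqP x n) => xn /=; last by rewrite oppr0.
  case D: (Dk_part k (n - x) (y :: t)) => /=; last by rewrite oppr0.
  have srt : path geq y t by case/and4P: D => /andP[].
  have /allP al := order_path_min gt srt.
  have -> : all (fun y0 => (y0 < x)%N) t.
    by apply/allP => z /al /= zy; apply: leq_ltn_trans zy yx.
  have -> : all (fun y0 => (y0 < u)%N) t.
    by apply/allP => z /al /= zy; apply: leq_ltn_trans zy (ltn_trans yx xu).
  by rewrite xu yx (ltn_trans yx xu) /= exprS mulN1r.
- have -> : w k (n - x) x (x :: t) = 0 by rewrite /w /= ltnn !andbF.
  rewrite if_same subr0.
  have nk : nseq k x = x :: nseq k.-1 x by case: k k0.
  case E: (x :: t == nseq k.-1 x).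
    have E' : [:: x, x & t] = nseq k x by rewrite (eqP E) nk.
    rewrite E' /w; have [-> ->] := Dk_nseq n x k0.
    by rewrite all_nseq xu orbT andbT /=; case: (k * x == n)%N.
  rewrite /= /w; case D: (Dk_part k n [:: x, x & t]) => //=.
  by have := Dk_eq_nseq D; rewrite nk => -[] /eqP; rewrite E.
Qed.

Lemma sum_iota_eq (F : nat -> int) m u :
  \sum_(x <- iota 0 m) (if x == u then F x else 0) = if (u < m)%N then F u else 0.
Proof.
elim: m => [|m IH]; first by rewrite big_nil.
rewrite -addn1 iotaD big_cat IH /= big_cons big_nil addr0 add0n.
case: (ltngtP u m) => [um|mu|->]; rewrite ?eqxx ?addr0 ?addn1 ?ltnS.
- by rewrite ltnW.
- by rewrite leqNgt mu.
- by rewrite add0r leqnn.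
Qed.

Fixpoint Bp (k u : nat) : {poly int} :=
  match u with
  | 0 => 0
  | u'.+1 => (1 - 'X^u') * Bp k u' + 'X^(k * u')
  end.

Lemma coef_BpS k u n : (Bp k u.+1)`_n =
  (Bp k u)`_n - (if (u <= n)%N then (Bp k u)`_(n - u) else 0) + ((k * u == n)%N)%:R.
Proof.
rewrite /= coefD mulrBl mul1r coefB coefXnM coefXn ltnNge eq_sym.
by case: (u <= n)%N.
Qed.

Definition A L M k n u := \sum_(s <- seqs_upto L M) w k n u s.

Lemma A_u0 L M k n : A L M k n 0 = 0.
Proof.
rewrite /A big1_seq // => -[|x t] _; first by rewrite w_nil.
by rewrite /w /= andbF.
Qed.

Lemma A_Bp k L : (0 < k)%N -> forall M n u, (n + k <= L)%N -> (n <= M)%N ->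
  A L M k n u = (Bp k u)`_n.
Proof.
move=> k0; elim: L => [|L IHL] M n u nL nM; first by lia.
pose H x := \sum_(t <- seqs_upto L M)
   (((t == nseq k.-1 x) && (k * x == n)%N)%:R
    - (if (x <= n)%N then w k (n - x) x t else 0)).
have -> : A L.+1 M k n u = \sum_(x <- iota 0 M.+1) (if (x < u)%N then H x else 0).
  rewrite /A sum_seqs_upto w_nil add0r; apply: eq_bigr => x _.
  rewrite /H; case: ifP => xu.
    by apply: eq_bigr => t _; rewrite w_cons // xu.
  by rewrite big1 // => t _; rewrite w_cons // xu.
have HE x : (x <= M)%N -> H x =
   ((k * x == n)%N)%:R - (if (x <= n)%N then (Bp k x)`_(n - x) else 0).
  move=> xM; rewrite /H sumrB; congr (_ - _).
    case c: (k * x == n)%N.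
      under eq_bigr do rewrite andbT.
      rewrite sum_eq1 ?uniq_seqs_upto // mem_seqs_upto size_nseq all_nseq.
      have -> : (k.-1 <= L)%N by lia.
      by rewrite xM orbT.
    under eq_bigr do rewrite andbF.
    by rewrite big1_eq.
  case: (leqP x n) => xn; last by rewrite big1.
  case: x xM xn => [|x] xM xn.
    by rewrite subn0; change (A L M k n 0 = (Bp k 0)`_n); rewrite A_u0 coef0.
  change (A L M k (n - x.+1) x.+1 = (Bp k x.+1)`_(n - x.+1)).
  rewrite IHL //; lia.
elim: u => [|u IHu].
  by rewrite coef0 big1 // => x _; rewrite ltn0.
rewrite coef_BpS -IHu.
have -> : \sum_(x <- iota 0 M.+1) (if (x < u.+1)%N then H x else 0) =
   \sum_(x <- iota 0 M.+1) (if (x < u)%N then H x else 0) +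
   \sum_(x <- iota 0 M.+1) (if x == u then H x else 0).
  rewrite -big_split; apply: eq_bigr => x _ /=.
  case: (ltngtP x u) => [xu|ux|->]; rewrite ?ltnn ?eqxx ?addr0 ?add0r.
  - by rewrite ltnS ltnW.
  - by rewrite ltnS leqNgt ux.
  - by rewrite ltnS leqnn.
rewrite sum_iota_eq ltnS.
case: (leqP u M) => uM.
  by rewrite HE // addrCA addrC.
have ku : (u <= k * u)%N by rewrite leq_pmull.
have -> : (k * u == n)%N = false by apply/negbTE; lia.
have -> : (u <= n)%N = false by apply/negbTE; lia.
by rewrite addr0 subr0.
Qed.

Lemma Bp1 k : Bp k 1 = 1.
Proof. by rewrite /= mulr0 add0r muln0 expr0. Qed.

Lemma Bp_rec k u : (0 < u)%N -> Bp k.+1 u = (1 - 'X^k) * Bp k u + 'X^(k * u).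
Proof.
case: u => [|v] // _; elim: v => [|v IH].
  by rewrite !Bp1 muln1 mulr1 subrK.
have S1 : Bp k.+1 v.+2 = (1 - 'X^(v.+1)) * Bp k.+1 v.+1 + 'X^(k.+1 * v.+1) by [].
have S2 : Bp k v.+2 = (1 - 'X^(v.+1)) * Bp k v.+1 + 'X^(k * v.+1) by [].
rewrite S1 S2 IH mulSn !mulnS !exprD.
ring.
Qed.

Lemma Bp_van k : forall u n, (0 < u)%N -> (n < u)%N -> (k.+1 * k < 2 * n)%N ->
  (Bp k.+1 u)`_n = 0.
Proof.
elim: k => [|k IH] u n u0 nu kn.
  rewrite Bp_rec // mul0n expr0 subrr mul0r add0r coef1.
  by have -> : (n == 0)%N = false by apply/negbTE; lia.
rewrite Bp_rec // coefD mulrBl mul1r coefB coefXnM coefXn.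
rewrite IH //; last by nia.
have ku : (u <= k.+1 * u)%N by rewrite leq_pmull.
have -> : (n == k.+1 * u)%N = false by apply/negbTE; lia.
case: ifP => h; first by reflexivity.
move: h; rewrite ltnNge => /negbFE h.
have h1 : (n - k.+1 < u)%N by lia.
have h2 : (k.+1 * k < 2 * (n - k.+1))%N by nia.
by rewrite (IH u (n - k.+1)%N u0 h1 h2).
Qed.

Lemma count_diff (P : pred (seq nat)) (f : seq nat -> nat) l :
  (count (fun s => P s && ~~ odd (f s)) l)%:R - (count (fun s => P s && odd (f s)) l)%:R
  = \sum_(s <- l) (if P s then (-1) ^+ f s else 0 : int).
Proof.
elim: l => [|s l IH]; first by rewrite big_nil subrr.
rewrite big_cons /= -IH !natrD -signr_odd.
case: (P s); case: (odd (f s)) => /=; rewrite ?add0n ?expr1 ?expr0; ring.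
Qed.

Lemma count_split (P Q : pred (seq nat)) l :
  count P l = (count (fun s => P s && ~~ Q s) l + count (fun s => P s && Q s) l)%N.
Proof.
elim: l => [|s l IH] //=; rewrite IH.
by case: (P s); case: (Q s) => /=; lia.
Qed.

Lemma mem_le_sumn (s : seq nat) x : x \in s -> (x <= sumn s)%N.
Proof.
elim: s => [|y s IH] //=; rewrite inE => /orP[/eqP->|/IH]; first exact: leq_addr.
by move=> h; apply: leq_trans h (leq_addl _ _).
Qed.

Lemma corollary9_aux (k n : nat) :
  (0 < k)%N -> (k * (k - 1) < 2 * n)%N ->
  De k n = Do k n /\ ~~ odd (D k n).
Proof.
move=> k0 kn.
have E : (De k n)%:R - (Do k n)%:R = 0 :> int.
  rewrite /De /Do count_diff.
  have -> : \sum_(s <- seqs_upto (n + k) n)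
      (if Dk_part k n s then (-1) ^+ size (big_parts s) else 0 : int)
      = A (n + k) n k n n.+1.
    apply: eq_bigr => s _; rewrite /w.
    case D: (Dk_part k n s) => //=.
    have -> : all (fun y => (y < n.+1)%N) s => //.
    apply/allP => y ys; rewrite ltnS.
    case/and4P: D => /andP[_ /eqP <-] _ _ _; exact: mem_le_sumn.
  rewrite A_Bp //.
  case: k k0 kn => [|k] // _ kn.
  apply: Bp_van => //; move: kn; rewrite subSS subn0 //.
have eq : De k n = Do k n.
  by move/eqP: E; rewrite subr_eq0 eqr_nat => /eqP.
split => //.
rewrite /D (count_split _ (fun s => odd (size (big_parts s)))) -/(De k n) -/(Do k n).
by rewrite eq addnn odd_double.
Qed.

Local Close Scope ring_scope.

(* n > k(k-1)/2 is written as k(k-1) < 2n *)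
Theorem corollary9 (k n : nat) :
  0 < k -> k * (k - 1) < 2 * n ->
  De k n = Do k n /\ ~~ odd (D k n).
Proof. exact: corollary9_aux. Qed.
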